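(* Let $p$ be an integer with $|p|>1$ and let $G=\mathbb{Z}[1/p]\rtimes\mathbb{Z}$ with multiplication $(f_1,c_1)(f_2,c_2)=(f_1+p^{-c_1}f_2,\,c_1+c_2)$. Let $C=\{(f_i,c_i)\}$ be a finite generating set of $G$ closed under inverses, let $c=\max\{c_i\mid (f_i,c_i)\in C\}$, and let $d_C$ be the word metric on $G$ with respect to $C$. Then there is a constant $M$ (depending on $p$ and $C$) such that for every $r\ge 0$ and all $h=(f,0)$, $h'=(f',0)$ in the subgroup $\mathbb{Z}[1/p]\times\{0\}\subset G$ with $d_C(h,h')\le r$, we have $\big||f|-|f'|\big|\le M|p|^{rc/2}$ and $|\mathrm{denom}(f)-\mathrm{denom}(f')|\le M|p|^{rc/2}$.
   Context: $G$ is isomorphic to the Baumslag-Solitar group $B_{1,p}=\langle a,t\mid t^{-1}at=a^p\rangle$. The word metric is $d_C(g,g')=$ the least number of elements of $C$ whose product equals $g^{-1}g'$. For $f\in\mathbb{Z}[1/p]$, $|f|$ is its usual absolute value, and $\mathrm{denom}(f)$ is $|p|^{n}$ where $n\ge 0$ is the least nonnegative integer such that $f=m/p^{n}$ for some integer $m$. *)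

(* Defs.v *)
From HB Require Import structures.
From mathcomp Require Import all_boot all_order all_algebra.
From mathcomp Require Import all_classical all_reals all_analysis.
From Stdlib Require Import ClassicalEpsilon.
Set Implicit Arguments. Unset Strict Implicit. Unset Printing Implicit Defensive.
Import Order.TTheory GRing.Theory Num.Theory.
Local Open Scope ring_scope.

(* Elements of Z[1/p] ⋊ Z are represented as pairs (f, c) : rat * int with
   f in Z[1/p] (i.e. f * p^n is an integer for some n). *)

Definition pint_at (p : int) (f : rat) (n : nat) : bool :=
  denq (f * (p%:~R : rat) ^+ n) == 1.

Definition in_Zinvp (p : int) (f : rat) : Prop := exists n : nat, pint_at p f n.

Definition inG (p : int) (g : rat * int) : Prop := in_Zinvp p g.1.

Definition bsmul (p : int) (x y : rat * int) : rat * int :=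
  (x.1 + (p%:~R : rat) ^ (- x.2) * y.1, x.2 + y.2).

Definition bsone : rat * int := (0, 0).

Definition bsinv (p : int) (x : rat * int) : rat * int :=
  (- ((p%:~R : rat) ^ x.2 * x.1), - x.2).

Definition bsprod (p : int) (w : seq (rat * int)) : rat * int :=
  foldr (bsmul p) bsone w.

Definition word_over (C : seq (rat * int)) (w : seq (rat * int)) : bool :=
  all (fun x => x \in C) w.

(* C generates G (as a monoid; C is closed under inverses) *)
Definition generates (p : int) (C : seq (rat * int)) : Prop :=
  forall g, inG p g -> exists w, word_over C w /\ bsprod p w = g.

Definition word_dist_is (p : int) (C : seq (rat * int)) (g g' : rat * int) (n : nat)
  : Prop :=
  (exists w, word_over C w /\ size w = n /\ bsprod p w = bsmul p (bsinv p g) g') /\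
  (forall w, word_over C w -> bsprod p w = bsmul p (bsinv p g) g' -> (n <= size w)%N).

Definition cmax (C : seq (rat * int)) : int :=
  \big[Num.max/(head bsone C).2]_(x <- C) x.2.

(* least n such that f = m / p^n (0 if none exists, irrelevant for f in Z[1/p]) *)
Definition pden_exp (p : int) (f : rat) : nat :=
  match excluded_middle_informative (exists n, pint_at p f n) with
  | left H => ex_minn H
  | right _ => 0%N
  end.

Definition pdenom (p : int) (f : rat) : rat := (`|p|%:~R : rat) ^+ pden_exp p f.

(* Main.v *)
Require Import Defs.
From HB Require Import structures.
From mathcomp Require Import all_boot all_order all_algebra.
From mathcomp Require Import all_classical all_reals all_analysis.
From mathcomp Require Import ring lra zify.
From Stdlib Require Import ClassicalEpsilon.
Import Order.TTheory GRing.Theory Num.Theory.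
Local Open Scope ring_scope.

Lemma normrXz_rat (x : rat) (z : int) : `|x ^ z| = `|x| ^ z.
Proof. by case: z => n; rewrite /= ?normfV normrX. Qed.

Lemma pintE (p : int) f n : pint_at p f n = (f * (p%:~R : rat) ^ (n%:Z) \is a Num.int).
Proof. by rewrite /pint_at Qint_def. Qed.

Lemma Hsh (p : int) (y : rat) (a b : int) : p != 0 ->
  (y * (p%:~R : rat) ^ a) \is a Num.int -> a <= b -> (y * (p%:~R : rat) ^ b) \is a Num.int.
Proof.
move=> p0 ha hab.
have -> : b = a + (b - a) by rewrite addrC subrK.
have hP : (p%:~R : rat) != 0 by rewrite intr_eq0.
rewrite expfzDr // mulrA rpredM //.
have : 0 <= b - a by rewrite subr_ge0.
case: (b - a) => // n _.
by rewrite /= rpredX // intr_int.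
Qed.

Lemma pint_mono (p : int) f (a b : nat) : p != 0 -> pint_at p f a -> (a <= b)%N -> pint_at p f b.
Proof. by move=> p0; rewrite !pintE => h hab; apply: Hsh h _ => //; rewrite lez_nat. Qed.

Lemma bsprod_cat (p : int) u v : p != 0 ->
  bsprod p (u ++ v) = ((bsprod p u).1 + (p%:~R : rat) ^ (- (bsprod p u).2) * (bsprod p v).1,
                       (bsprod p u).2 + (bsprod p v).2).
Proof.
move=> p0; have hP : (p%:~R : rat) != 0 by rewrite intr_eq0.
elim: u => [|x u IH] /=.
  by case: (bsprod p v) => a b /=; rewrite oppr0 expr0z mul1r !add0r.
rewrite /bsmul IH /=; congr pair; last by rewrite addrA.
by rewrite opprD expfzDr // mulrDr mulrA addrA.
Qed.

Lemma pden_spec (p : int) f : in_Zinvp p f ->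
  pint_at p f (pden_exp p f) /\ forall n, pint_at p f n -> (pden_exp p f <= n)%N.
Proof.
rewrite /pden_exp => hf; case: excluded_middle_informative => [H|//].
by case: ex_minnP.
Qed.

Lemma sum_norm_ge (s : seq (rat * int)) x : x \in s -> `|x.1| <= \sum_(y <- s) `|y.1|.
Proof.
elim: s => // y s IH; rewrite inE big_cons => /predU1P [->| xs].
  by rewrite lerDl sumr_ge0 // => *; rewrite normr_ge0.
by rewrite (le_trans (IH xs)) // lerDr normr_ge0.
Qed.

Lemma sum_nat_ge (s : seq (rat * int)) (F : rat * int -> nat) x :
  x \in s -> (F x <= \sum_(y <- s) F y)%N.
Proof.
elim: s => // y s IH; rewrite inE big_cons => /predU1P [->| xs].
  by rewrite leq_addr.
by rewrite (leq_trans (IH xs)) // leq_addl.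
Qed.

Lemma Xz_le (Q : rat) (z : int) (n : nat) : 1 <= Q -> z <= n%:Z -> Q ^ z <= Q ^+ n.
Proof. by move=> Q1 hz; exact: (ler_weXz2l Q1 hz). Qed.

Lemma L1 (p : int) (C : seq (rat * int)) (F : rat) (D c : nat) (hp : 1 < `|p|)
  (hF : forall x : rat * int, x \in C -> `|x.1| <= F) (hD : forall x : rat * int, x \in C -> pint_at p x.1 D)
  (hc : forall x : rat * int, x \in C -> - (c%:Z) <= x.2 <= c%:Z) (c1 : (1 <= c)%N) (F0 : 0 <= F) :
  forall u, word_over C u ->
    `|(bsprod p u).1| <= F * ((`|p|%:~R : rat) ^+ (c * size u) - 1) /\
    pint_at p (bsprod p u).1 (D + c * size u).
Proof.
have p0 : p != 0 by apply: contraTneq hp => ->.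
have hP : (p%:~R : rat) != 0 by rewrite intr_eq0.
have Q2 : 2 <= (`|p|%:~R : rat).
  have h : ((2:int)%:~R : rat) <= `|p|%:~R by rewrite ler_int; lia.
  exact: h.
elim => [|x u IH] /=.
  by rewrite muln0 expr0 subrr mulr0 normr0 lexx pintE mul0r rpred0.
move=> /andP [xC wu]; have [IH1 IH2] := IH wu.
have [hx1 hx2] := andP (hc x xC).
set y := (bsprod p u).1 in IH1 IH2 *.
set Q := (`|p|%:~R : rat) in Q2 IH1 *.
split.
  rewrite (le_trans (ler_normD _ _)) // normrM normrXz_rat -intr_norm -/Q.
  have hA : Q ^ (- x.2) <= Q ^+ c by apply: Xz_le; [lra| rewrite lerNl].
  have A2 : 2 <= Q ^+ c by rewrite (le_trans Q2) // -{1}(expr1 Q) ler_weXn2l //; lra.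
  have B1 : 1 <= Q ^+ (c * size u) by rewrite exprn_ege1 //; lra.
  have hQz : 0 <= Q ^ (- x.2) by rewrite exprz_ge0 //; lra.
  rewrite mulnS exprD.
  have := hF x xC; have := normr_ge0 y.
  set A := Q ^+ c in A2 hA *; set B := Q ^+ (c * size u) in B1 IH1 *.
  set z := Q ^ (- x.2) in hA hQz *.
  move=> y0 hx.
  have h1 : z * `|y| <= A * (F * (B - 1)).
    apply: (le_trans (ler_wpM2l hQz IH1)); apply: ler_wpM2r => //.
    by rewrite mulr_ge0 // subr_ge0.
  nra.
rewrite pintE mulrDl rpredD //.
  have := hD x xC; rewrite pintE => h.
  have hb : (D%:Z) <= (D + c * (size u).+1)%N by rewrite lez_nat leq_addr.
  exact: (Hsh _ _ _ _ p0 h hb).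
rewrite mulrC mulrA -expfzDr // mulrC; move: IH2; rewrite pintE => IH2.
have hb : ((D + c * size u)%N : int) <= (((D + c * (size u).+1)%N : int) - x.2).
  rewrite mulnS !PoszD; lia.
exact: (Hsh _ _ _ _ p0 IH2 hb).
Qed.

Lemma L2c (p : int) (C : seq (rat * int)) (c : nat)
  (hc : forall x : rat * int, x \in C -> - (c%:Z) <= x.2 <= c%:Z) :
  forall v, word_over C v ->
    - ((c * size v)%N : int) <= (bsprod p v).2 <= (c * size v)%N.
Proof.
elim => [|x v IH] /=; first by rewrite muln0 oppr0 lexx.
move=> /andP [xC wv]; have /andP [hs1 hs2] := IH wv.
have [hx1 hx2] := andP (hc x xC).
set s := (bsprod p v).2 in hs1 hs2 *.
rewrite mulnS PoszD; apply/andP; split; lia.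
Qed.

Lemma L2b (p : int) (C : seq (rat * int)) (D c : nat) (hp : 1 < `|p|)
  (hD : forall x : rat * int, x \in C -> pint_at p x.1 D)
  (hc : forall x : rat * int, x \in C -> - (c%:Z) <= x.2 <= c%:Z) :
  forall v, word_over C v ->
    ((bsprod p v).1 * (p%:~R : rat) ^ ((bsprod p v).2 + (D + c * size v)%N)) \is a Num.int.
Proof.
have p0 : p != 0 by apply: contraTneq hp => ->.
have hP : (p%:~R : rat) != 0 by rewrite intr_eq0.
elim => [|x v IH] /=; first by rewrite /bsone /= mul0r rpred0.
move=> /andP [xC wv]; have IH2 := IH wv.
have /andP [hs1 hs2] := L2c p C c hc v wv.
have [hx1 hx2] := andP (hc x xC).
set y := (bsprod p v).1 in IH2 *.
set s := (bsprod p v).2 in IH2 hs1 hs2 *.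
rewrite mulrDl rpredD //.
  have := hD x xC; rewrite pintE => h.
  have hb : (D%:Z) <= x.2 + s + (D + c * (size v).+1)%N.
    rewrite mulnS !PoszD; lia.
  exact: (Hsh _ _ _ _ p0 h hb).
rewrite mulrC mulrA -expfzDr // mulrC.
have hb : (s + (D + c * size v)%N) <= (x.2 + s + (D + c * (size v).+1)%N) - x.2.
  rewrite mulnS !PoszD; lia.
exact: (Hsh _ _ _ _ p0 IH2 hb).
Qed.

Lemma L2a (p : int) (C : seq (rat * int)) (F : rat) (c : nat) (hp : 1 < `|p|)
  (hF : forall x : rat * int, x \in C -> `|x.1| <= F)
  (hc : forall x : rat * int, x \in C -> - (c%:Z) <= x.2 <= c%:Z) (c1 : (1 <= c)%N) (F0 : 0 <= F) :
  forall v, word_over C v ->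
    (`|p|%:~R : rat) ^ (bsprod p v).2 * `|(bsprod p v).1|
       <= 2 * F * ((`|p|%:~R : rat) ^+ (c * size v) - 1).
Proof.
have Q2 : 2 <= (`|p|%:~R : rat).
  have h : ((2:int)%:~R : rat) <= `|p|%:~R by rewrite ler_int; lia.
  exact: h.
have Q1 : 1 <= (`|p|%:~R : rat) by lra.
elim => [|x v IH] /=.
  rewrite /bsone /= muln0 expr0 subrr => _.
  have -> : `|(0:rat)| = 0 by rewrite normr0.
  by rewrite !mulr0.
move=> /andP [xC wv]; have IH1 := IH wv.
have /andP [hs1 hs2] := L2c p C c hc v wv.
have [hx1 hx2] := andP (hc x xC).
set y := (bsprod p v).1 in IH1 *.
set s := (bsprod p v).2 in IH1 hs1 hs2 *.
set Q := (`|p|%:~R : rat) in Q1 Q2 IH1 *.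
have Q0 : Q != 0 by rewrite gt_eqF // (lt_le_trans ltr01 Q1).
have e : Q ^ (x.2 + s) * Q ^ (- x.2) = Q ^ s.
  by rewrite -expfzDr // addrAC subrr add0r.
have hz0 : 0 <= Q ^ (x.2 + s) by rewrite exprz_ge0 // (le_trans ler01 Q1).
have hle : Q ^ (x.2 + s) * `|x.1 + (p%:~R : rat) ^ (- x.2) * y|
    <= Q ^ (x.2 + s) * `|x.1| + Q ^ s * `|y|.
  rewrite -e -mulrA -mulrDr; apply: ler_wpM2l => //.
  by rewrite (le_trans (ler_normD _ _)) // normrM normrXz_rat -intr_norm.
apply: (le_trans hle).
have hA : Q ^ (x.2 + s) <= Q ^+ (c * (size v).+1).
  by apply: Xz_le; [exact: Q1 | rewrite mulnS PoszD lerD].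
have A2 : 2 <= Q ^+ c by rewrite (le_trans Q2) // -{1}(expr1 Q) ler_weXn2l.
have B1 : 1 <= Q ^+ (c * size v) by rewrite exprn_ege1.
move: hA; rewrite mulnS exprD.
have := hF x xC; have := normr_ge0 x.1.
set A := Q ^+ c in A2 *; set B := Q ^+ (c * size v) in B1 IH1 *.
set z := Q ^ (x.2 + s) in hz0 *.
move=> x0 hx hzA.
have h1 : z * `|x.1| <= A * B * F.
  by apply: (le_trans (ler_wpM2l hz0 hx)); apply: ler_wpM2r.
have h2 : 0 <= F * B * (A - 2).
  apply: mulr_ge0; [apply: mulr_ge0 => //; exact: le_trans ler01 B1 | by rewrite subr_ge0].
apply: (le_trans (lerD h1 IH1)).
rewrite -subr_ge0.
have -> : 2 * F * (A * B - 1) - (A * B * F + 2 * F * (B - 1)) = F * B * (A - 2) by ring.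
exact: h2.
Qed.

Lemma cmax_ge (C : seq (rat * int)) (x : rat * int) : x \in C -> x.2 <= cmax C.
Proof. by move=> xC; rewrite /cmax; apply: le_bigmax_seq. Qed.

Arguments cmax_ge {C x}.

Lemma prod2_le0 p (C : seq (rat * int)) w :
  (forall x : rat * int, x \in C -> x.2 <= 0) -> word_over C w -> (bsprod p w).2 <= 0.
Proof.
move=> hC; elim: w => [|x w IH] /=; first by [].
move=> /andP [xC wC]; have := IH wC; have := hC x xC.
set s := (bsprod p w).2; rewrite /bsmul /= -/s; lia.
Qed.

Arguments pden_spec {p f}.

Lemma Lden (p : int) (g f f' : rat) (N : nat) : p != 0 ->
  pint_at p g N -> f' = f + g -> in_Zinvp p f -> in_Zinvp p f' ->
  (N < pden_exp p f)%N -> pden_exp p f = pden_exp p f'.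
Proof.
move=> p0 hg -> hf hf' hN.
have [ha ma] := pden_spec hf; have [hb mb] := pden_spec hf'.
set a := pden_exp p f in ha ma hN *; set b := pden_exp p (f + g) in hb mb *.
have hga : pint_at p g a by apply: pint_mono hg _ => //; exact: ltnW.
have hba : (b <= a)%N by apply: mb; move: ha hga; rewrite !pintE mulrDl; exact: rpredD.
have hNb : (N < b)%N.
  rewrite ltnNge; apply/negP => hbN.
  have : pint_at p f N.
    have hb' : pint_at p (f + g) N by apply: pint_mono hb hbN.
    move: hb' hg; rewrite !pintE => h1 h2.
    have -> : f = (f + g) - g by rewrite addrK.
    by rewrite mulrBl rpredB.
  by move/ma; rewrite leqNgt hN.
have hgb : pint_at p g b by apply: pint_mono hg _ => //; exact: ltnW.
have hab : (a <= b)%N.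
  apply: ma; move: hb hgb; rewrite !pintE => h1 h2.
  have -> : f = (f + g) - g by rewrite addrK.
  by rewrite mulrBl rpredB.
by apply/eqP; rewrite eqn_leq hab hba.
Qed.

Arguments Lden {p g f f' N}.

Lemma dist_le (x y K : rat) : 0 <= x <= K -> 0 <= y <= K -> `|x - y| <= K.
Proof. move=> /andP [x0 xK] /andP [y0 yK]; rewrite ler_norml; apply/andP; split; lra. Qed.

Lemma aux_exp (R : realType) (c m n : nat) (r : R) :
  (2 * m <= n.+1)%N -> n%:R <= r -> (c * m)%:R <= c%:R + r * c%:R / 2 :> R.
Proof.
move=> hm hn.
have h : (2 * m)%:R <= (n.+1)%:R :> R by rewrite ler_nat.
rewrite natrM -addn1 natrD in h.
have h2 : 0 <= r + 2 - 2 * m%:R by lra.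
have := mulr_ge0 (ler0n R c) h2.
rewrite natrM; lra.
Qed.

Arguments L1 {p C F D c}.
Arguments L2a {p C F c}.
Arguments L2b {p C D c}.
Arguments bsprod_cat p u v : clear implicits.

Lemma half_facts n : (n./2 <= n - n./2)%N /\ (2 * (n - n./2) <= n.+1)%N /\ (n./2 <= n)%N.
Proof. have := odd_double_half n; lia. Qed.

Theorem lemma2 (R : realType) (p : int) (hp : 1 < `|p|)
  (C : seq (rat * int))
  (hCG : forall x, x \in C -> inG p x)
  (hCinv : forall x, x \in C -> bsinv p x \in C)
  (hgen : generates p C) :
  exists M : R,
    forall (r : R) (f f' : rat),
      0 <= r -> in_Zinvp p f -> in_Zinvp p f' ->
      (exists n : nat, word_dist_is p C (f, 0) (f', 0) n /\ n%:R <= r) ->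
      `| `|(ratr f : R)| - `|(ratr f' : R)| | <=
          M * ((`|p|%:~R : R) `^ (r * (cmax C)%:~R / 2))
      /\
      `| (ratr (pdenom p f) : R) - ratr (pdenom p f') | <=
          M * ((`|p|%:~R : R) `^ (r * (cmax C)%:~R / 2)).
Proof.
have p0 : p != 0 by apply: contraTneq hp => ->.
have hP : (p%:~R : rat) != 0 by rewrite intr_eq0.
have hc0 : 0 < cmax C.
  have [w [wC hw]] : exists w, word_over C w /\ bsprod p w = (0, 1).
    by apply: hgen; exists 0%N; rewrite /pint_at mul0r.
  rewrite ltNge; apply/negP => h.
  have := prod2_le0 p C w (fun x xC => le_trans (cmax_ge xC) h) wC.
  by rewrite hw.
set c := `|cmax C|%N.
have ec : cmax C = c%:Z by rewrite /c gez0_abs // ltW.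
have c1 : (1 <= c)%N by rewrite -lez_nat -ec.
have hc : forall x : rat * int, x \in C -> - (c%:Z) <= x.2 <= c%:Z.
  move=> x xC; rewrite -ec; apply/andP; split; last exact: cmax_ge.
  by have := cmax_ge (hCinv x xC); rewrite /bsinv /= lerNl.
set F := \sum_(y <- C) `|y.1|.
have F0 : 0 <= F by rewrite sumr_ge0 // => *; rewrite normr_ge0.
have hF : forall x : rat * int, x \in C -> `|x.1| <= F by move=> x; exact: sum_norm_ge.
set D := (\sum_(y <- C) pden_exp p y.1)%N.
have hD : forall x : rat * int, x \in C -> pint_at p x.1 D.
  move=> x xC; have [h _] := pden_spec (hCG x xC).
  apply: pint_mono h _ => //; exact: (sum_nat_ge C (fun y : rat * int => pden_exp p y.1)).
set Q := (`|p|%:~R : rat).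
have Q2 : 2 <= Q.
  have h : ((2:int)%:~R : rat) <= `|p|%:~R by rewrite ler_int; lia.
  exact: h.
have Q1 : 1 <= Q by exact: le_trans _ Q2.
set q := (`|p|%:~R : R).
have q1 : 1 <= q by rewrite /q ler1z; lia.
have q0 : 0 <= q by exact: le_trans ler01 q1.
have qn0 : q != 0 by rewrite gt_eqF // (lt_le_trans ltr01 q1).
exists (ratr (3 * F + Q ^+ D) * q ^+ c).
move=> r f f' r0 hf hf' [n [[[w [wC [sw hw]]] _] hnr]].
set T := q `^ (r * (cmax C)%:~R / 2).
have hw' : bsprod p w = (f' - f, 0).
  by rewrite hw /bsmul /bsinv /= !oppr0 !expr0z !mul1r addr0 addrC.
have [hkm [h2m hk]] := half_facts n.
set k := n./2 in hkm h2m hk *; set m := (n - k)%N in hkm h2m *.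
set u := take k w; set v := drop k w.
have wu : word_over C u by move: wC; rewrite -(cat_take_drop k w) /word_over all_cat => /andP [].
have wv : word_over C v by move: wC; rewrite -(cat_take_drop k w) /word_over all_cat => /andP [].
have hk' : (k <= size w)%N by rewrite sw.
have su : size u = k by rewrite /u size_takel.
have sv : size v = m by rewrite /v size_drop sw.
have E := bsprod_cat p u v p0.
rewrite /u /v cat_take_drop -/u -/v hw' in E.
case: E => E1 E2.
have esu : - (bsprod p u).2 = (bsprod p v).2 by apply/eqP; rewrite eq_sym -addr_eq0 addrC -E2.
have [U1 U2] := L1 hp hF hD hc c1 F0 _ wu.
have V1 := L2a hp hF hc c1 F0 _ wv.
have V2 := L2b hp hD hc _ wv.
rewrite su in U1 U2; rewrite sv in V1 V2.
rewrite esu in E1.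
set g := f' - f in E1.
have Hg : `|g| <= 3 * F * Q ^+ (c * m).
  rewrite E1 (le_trans (ler_normD _ _)) // normrM normrXz_rat -intr_norm -/Q.
  apply: (le_trans (lerD U1 V1)).
  have hX : Q ^+ (c * k) <= Q ^+ (c * m) by rewrite ler_weXn2l // leq_mul2l hkm orbT.
  rewrite -subr_ge0.
  have -> : 3 * F * Q ^+ (c * m) - (F * (Q ^+ (c * k) - 1) + 2 * F * (Q ^+ (c * m) - 1))
     = F * (Q ^+ (c * m) - Q ^+ (c * k)) + 3 * F by ring.
  by rewrite addr_ge0 ?mulr_ge0 // subr_ge0.
have Hgi : pint_at p g (D + c * m).
  rewrite pintE E1 mulrDl rpredD //.
    move: U2; rewrite pintE => U2.
    have hb : ((D + c * k)%N : int) <= (D + c * m)%N by rewrite lez_nat leq_add2l leq_mul2l hkm orbT.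
    exact: (Hsh _ _ _ _ p0 U2 hb).
  by rewrite mulrC mulrA -expfzDr // mulrC addrC.
have key : forall K : rat, 0 <= K -> K <= 3 * F + Q ^+ D ->
    (ratr (K * Q ^+ (c * m)) : R) <= ratr (3 * F + Q ^+ D) * q ^+ c * T.
  move=> K K0 KM.
  rewrite rmorphM rmorphXn /= ratr_int -/q -mulrA.
  apply: ler_pM.
  - by rewrite ler0q.
  - by rewrite exprn_ge0.
  - by rewrite ler_rat.
  rewrite /T -!powR_mulrn // -powRD; last by rewrite qn0 implybT.
  apply: ler_powR => //.
  rewrite ec pmulrn.
  exact: aux_exp h2m hnr.
split.
  apply: (le_trans (ler_dist_dist _ _)).
  rewrite distrC -rmorphB /= -/g -ratr_norm.
  apply: (le_trans _ (key (3 * F) _ _)); last by rewrite lerDl exprn_ge0 // (le_trans ler01 Q1).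
    by rewrite ler_rat.
  by rewrite mulr_ge0.
rewrite -rmorphB /= -ratr_norm /pdenom -/Q.
have Hd : `|Q ^+ pden_exp p f - Q ^+ pden_exp p f'| <= Q ^+ D * Q ^+ (c * m).
  rewrite -exprD.
  case: (ltnP (D + c * m) (pden_exp p f)) => h1.
    rewrite (Lden p0 Hgi _ hf hf' h1); last by rewrite /g addrC subrK.
    by rewrite subrr normr0 exprn_ge0 // (le_trans ler01 Q1).
  case: (ltnP (D + c * m) (pden_exp p f')) => h2.
    have Hgi' : pint_at p (- g) (D + c * m) by move: Hgi; rewrite !pintE mulNr rpredN.
    rewrite (Lden p0 Hgi' _ hf' hf h2); last by rewrite /g opprB addrC subrK.
    by rewrite subrr normr0 exprn_ge0 // (le_trans ler01 Q1).
  apply: dist_le; apply/andP; split.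
  - by rewrite exprn_ge0 // (le_trans ler01 Q1).
  - exact: ler_weXn2l.
  - by rewrite exprn_ge0 // (le_trans ler01 Q1).
  - exact: ler_weXn2l.
apply: (le_trans _ (key (Q ^+ D) _ _)).
- by rewrite ler_rat.
- by rewrite exprn_ge0 // (le_trans ler01 Q1).
- by rewrite lerDr mulr_ge0.
Qed.
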